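(* Let $(H,G,t,\Phi)$ be a crossed module of Lie groups and let $\mathcal{B}_1:H\to H$, $\mathcal{B}_0:G\to G$ be smooth maps. Put $$\mathrm{Gr}(\mathcal{B}_1)=\{(\mathcal{B}_1(p),p)\mid p\in H\}\subset H\ltimes H,\qquad \mathrm{Gr}(\mathcal{B}_0)=\{(\mathcal{B}_0(a),a)\mid a\in G\}\subset G\ltimes G.$$ Then $(\mathcal{B}_1,\mathcal{B}_0)$ is a Rota-Baxter operator on $(H,G,t,\Phi)$ if and only if $\mathrm{Gr}(\mathcal{B}_1)$ and $\mathrm{Gr}(\mathcal{B}_0)$ are Lie subgroups of $H\ltimes H$ and $G\ltimes G$ respectively, the map $(t,t)(p,q)=(t(p),t(q))$ restricts to a Lie group homomorphism $\mathrm{Gr}(\mathcal{B}_1)\to\mathrm{Gr}(\mathcal{B}_0)$ (i.e. $(t(\mathcal{B}_1(p)),t(p))\in \mathrm{Gr}(\mathcal{B}_0)$), the action $\tilde\Phi$ restricts to an action of $\mathrm{Gr}(\mathcal{B}_0)$ on $\mathrm{Gr}(\mathcal{B}_1)$ by automorphisms, namely $$\tilde{\Phi}\big((\mathcal{B}_0(a),a)\big)(\mathcal{B}_1(p),p)=\Big(\Phi(\mathcal{B}_0(a))\mathcal{B}_1(p),\ \Phi(a\mathcal{B}_0(a))(p\mathcal{B}_1(p))\cdot\Phi(\mathcal{B}_0(a))\mathcal{B}_1(p)^{-1}\Big)\in\mathrm{Gr}(\mathcal{B}_1),$$ and $(\mathrm{Gr}(\mathcal{B}_1),\mathrm{Gr}(\mathcal{B}_0),(t,t),\tilde\Phi)$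 is a crossed module of Lie groups.
   Context: A crossed module of Lie groups is a quadruple $(H,G,t,\Phi)$ where $H,G$ are Lie groups, $t:H\to G$ is a Lie group homomorphism and $\Phi:G\to\mathrm{Aut}(H)$ is a smooth action of $G$ on $H$ by automorphisms such that $\Phi(t(p))q=pqp^{-1}$ and $t(\Phi(a)p)=a\,t(p)\,a^{-1}$ for all $p,q\in H$, $a\in G$. A Rota-Baxter operator on a Lie group $G$ is a smooth map $\mathcal{B}:G\to G$ with $\mathcal{B}(a)\mathcal{B}(b)=\mathcal{B}(a\mathcal{B}(a)b\mathcal{B}(a)^{-1})$ for all $a,b\in G$. A Rota-Baxter operator on a crossed module of Lie groups $(H,G,t,\Phi)$ is a pair $(\mathcal{B}_1,\mathcal{B}_0)$ of smooth maps $\mathcal{B}_1:H\to H$, $\mathcal{B}_0:G\to G$ such that (i) $\mathcal{B}_1,\mathcal{B}_0$ are Rota-Baxter operators on $H$, $G$; (ii) $t\circ\mathcal{B}_1=\mathcal{B}_0\circ t$; (iii) $\Phi(\mathcal{B}_0(a))\mathcal{B}_1(p)=\mathcal{B}_1\big(\Phi(a\mathcal{B}_0(a))(p\mathcal{B}_1(p))\cdot\Phi(\mathcal{B}_0(a))\mathcal{B}_1(p)^{-1}\big)$ for all $a\in G,p\in H$. $G\ltimes G$ denotes $G\times G$ with product $(a,b)(c,d)=(ac,\ b\,a\,d\,a^{-1})$, and similarly $H\ltimes H$ with $(p,q)(r,s)=(pr,\ q\,p\,s\,p^{-1})$. The map $\tilde\Phi:G\ltimes G\to\mathrm{Aut}(H\ltimes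 H)$ is $\tilde{\Phi}((a,b))(p,q)=\big(\Phi(a)p,\ \Phi(ba)(qp)\cdot\Phi(a)p^{-1}\big)$; it is known that $(H\ltimes H,G\ltimes G,(t,t),\tilde\Phi)$ is a crossed module of Lie groups. *)

(* Defs.v *)
Set Implicit Arguments.

Record GOps := {
  carrier :> Type;
  gmul : carrier -> carrier -> carrier;
  gone : carrier;
  ginv : carrier -> carrier }.

Arguments gmul {g} _ _.
Arguments gone {g}.
Arguments ginv {g} _.

Definition is_group (G : GOps) : Prop :=
  (forall a b c : G, gmul a (gmul b c) = gmul (gmul a b) c) /\
  (forall a : G, gmul gone a = a) /\
  (forall a : G, gmul a gone = a) /\
  (forall a : G, gmul (ginv a) a = gone) /\
  (forall a : G, gmul a (ginv a) = gone).

Definition is_subgroup {G : GOps} (S : G -> Prop) : Prop :=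
  S gone /\ (forall a b, S a -> S b -> S (gmul a b)) /\ (forall a, S a -> S (ginv a)).

Definition crossed_module_on {H G : GOps} (SH : H -> Prop) (SG : G -> Prop)
    (t : H -> G) (Phi : G -> H -> H) : Prop :=
  is_subgroup SH /\ is_subgroup SG /\
  (forall p, SH p -> SG (t p)) /\
  (forall p q, SH p -> SH q -> t (gmul p q) = gmul (t p) (t q)) /\
  (forall a p, SG a -> SH p -> SH (Phi a p)) /\
  (forall a p q, SG a -> SH p -> SH q -> Phi a (gmul p q) = gmul (Phi a p) (Phi a q)) /\
  (forall a q, SG a -> SH q -> exists p, SH p /\ Phi a p = q /\
                    forall p', SH p' -> Phi a p' = q -> p' = p) /\
  (forall p, SH p -> Phi gone p = p) /\
  (forall a b p, SG a -> SG b -> SH p -> Phi (gmul a b) p = Phi a (Phi b p)) /\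
  (forall p q, SH p -> SH q -> Phi (t p) q = gmul (gmul p q) (ginv p)) /\
  (forall a p, SG a -> SH p -> t (Phi a p) = gmul (gmul a (t p)) (ginv a)).

Definition crossed_module {H G : GOps} (t : H -> G) (Phi : G -> H -> H) : Prop :=
  @crossed_module_on H G (fun _ => True) (fun _ => True) t Phi.

Definition rota_baxter {G : GOps} (B : G -> G) : Prop :=
  forall a b : G, gmul (B a) (B b) = B (gmul (gmul (gmul a (B a)) b) (ginv (B a))).

Definition rota_baxter_cm {H G : GOps} (t : H -> G) (Phi : G -> H -> H)
    (B1 : H -> H) (B0 : G -> G) : Prop :=
  rota_baxter B1 /\ rota_baxter B0 /\
  (forall p, t (B1 p) = B0 (t p)) /\
  (forall a p, Phi (B0 a) (B1 p) =
     B1 (gmul (Phi (gmul a (B0 a)) (gmul p (B1 p))) (ginv (Phi (B0 a) (B1 p))))).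

Definition sdprod (G : GOps) : GOps := {|
  carrier := (G * G)%type;
  gmul := fun x y => (gmul (fst x) (fst y),
                      gmul (gmul (gmul (snd x) (fst x)) (snd y)) (ginv (fst x)));
  gone := (gone, gone);
  ginv := fun x => (ginv (fst x), gmul (gmul (ginv (fst x)) (ginv (snd x))) (fst x)) |}.

Definition tt {H G : GOps} (t : H -> G) : sdprod H -> sdprod G :=
  fun x => (t (fst x), t (snd x)).

Definition Phi_tilde {H G : GOps} (Phi : G -> H -> H) : sdprod G -> sdprod H -> sdprod H :=
  fun x y => (Phi (fst x) (fst y),
              gmul (Phi (gmul (snd x) (fst x)) (gmul (snd y) (fst y)))
                   (ginv (Phi (fst x) (fst y)))).

Definition graph {G : GOps} (B : G -> G) : sdprod G -> Prop :=
  fun x => fst x = B (snd x).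

(* Main.v *)
Require Import Defs.

Section Dummy. End Dummy.

Lemma mulA {G : GOps} (hG : is_group G) (a b c : G) : gmul (gmul a b) c = gmul a (gmul b c).
Proof. destruct hG as (A & _). now rewrite A. Qed.
Lemma mul1l {G : GOps} (hG : is_group G) (a : G) : gmul gone a = a.
Proof. apply hG. Qed.
Lemma mul1r {G : GOps} (hG : is_group G) (a : G) : gmul a gone = a.
Proof. apply hG. Qed.
Lemma mulVl {G : GOps} (hG : is_group G) (a : G) : gmul (ginv a) a = gone.
Proof. apply hG. Qed.
Lemma mulVr {G : GOps} (hG : is_group G) (a : G) : gmul a (ginv a) = gone.
Proof. apply hG. Qed.
Lemma mulKl {G : GOps} (hG : is_group G) (a x : G) : gmul (ginv a) (gmul a x) = x.
Proof. rewrite <- (mulA hG), (mulVl hG), (mul1l hG); auto. Qed.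
Lemma mulKr {G : GOps} (hG : is_group G) (a x : G) : gmul a (gmul (ginv a) x) = x.
Proof. rewrite <- (mulA hG), (mulVr hG), (mul1l hG); auto. Qed.
Lemma inv_uniq {G : GOps} (hG : is_group G) (a b : G) : gmul a b = gone -> b = ginv a.
Proof. intro E. rewrite <- (mulKl hG a b), E, (mul1r hG). auto. Qed.
Lemma invM {G : GOps} (hG : is_group G) (a b : G) : ginv (gmul a b) = gmul (ginv b) (ginv a).
Proof. symmetry. apply (inv_uniq hG). rewrite (mulA hG), (mulKr hG), (mulVr hG). auto. Qed.
Lemma invK {G : GOps} (hG : is_group G) (a : G) : ginv (ginv a) = a.
Proof. symmetry. apply (inv_uniq hG). apply (mulVl hG). Qed.
Lemma inv1 {G : GOps} (hG : is_group G) : ginv (@gone G) = gone.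
Proof. symmetry. apply (inv_uniq hG). apply (mul1l hG). Qed.
Lemma idem1 {G : GOps} (hG : is_group G) (a : G) : gmul a a = a -> a = gone.
Proof. intro E. rewrite <- (mulKl hG a a), E. apply (mulVl hG). Qed.

Section CM.
End CM.

Lemma tM {H G : GOps} {t : H -> G} {Phi : G -> H -> H} (hcm : crossed_module t Phi)
  p q : t (gmul p q) = gmul (t p) (t q).
Proof. apply hcm; auto. Qed.
Lemma PhiM {H G : GOps} {t : H -> G} {Phi : G -> H -> H} (hcm : crossed_module t Phi)
  a p q : Phi a (gmul p q) = gmul (Phi a p) (Phi a q).
Proof. apply hcm; auto. Qed.
Lemma PhiC {H G : GOps} {t : H -> G} {Phi : G -> H -> H} (hcm : crossed_module t Phi)
  a b p : Phi (gmul a b) p = Phi a (Phi b p).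
Proof. apply hcm; auto. Qed.
Lemma Phi1 {H G : GOps} {t : H -> G} {Phi : G -> H -> H} (hcm : crossed_module t Phi)
  p : Phi gone p = p.
Proof. apply hcm; auto. Qed.
Lemma Pf1 {H G : GOps} {t : H -> G} {Phi : G -> H -> H} (hcm : crossed_module t Phi)
  p q : Phi (t p) q = gmul (gmul p q) (ginv p).
Proof. apply hcm; auto. Qed.
Lemma Pf2 {H G : GOps} {t : H -> G} {Phi : G -> H -> H} (hcm : crossed_module t Phi)
  a p : t (Phi a p) = gmul (gmul a (t p)) (ginv a).
Proof. apply hcm; auto. Qed.
Lemma t1 {H G : GOps} (hH : is_group H) (hG : is_group G) {t : H -> G} {Phi : G -> H -> H}
  (hcm : crossed_module t Phi) : t gone = gone.
Proof. apply (idem1 hG). rewrite <- (tM hcm), (mul1l hH). auto. Qed.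
Lemma tV {H G : GOps} (hH : is_group H) (hG : is_group G) {t : H -> G} {Phi : G -> H -> H}
  (hcm : crossed_module t Phi) p : t (ginv p) = ginv (t p).
Proof. apply (inv_uniq hG). rewrite <- (tM hcm), (mulVr hH). apply (t1 hH hG hcm). Qed.
Lemma Phi_1 {H G : GOps} (hH : is_group H) (hG : is_group G) {t : H -> G} {Phi : G -> H -> H}
  (hcm : crossed_module t Phi) a : Phi a gone = gone.
Proof. apply (idem1 hH). rewrite <- (PhiM hcm), (mul1l hH). auto. Qed.
Lemma PhiV {H G : GOps} (hH : is_group H) (hG : is_group G) {t : H -> G} {Phi : G -> H -> H}
  (hcm : crossed_module t Phi) a p : Phi a (ginv p) = ginv (Phi a p).
Proof. apply (inv_uniq hH). rewrite <- (PhiM hcm), (mulVr hH). apply (Phi_1 hH hG hcm). Qed.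
Lemma PhiK1 {H G : GOps} (hH : is_group H) (hG : is_group G) {t : H -> G} {Phi : G -> H -> H}
  (hcm : crossed_module t Phi) a p : Phi a (Phi (ginv a) p) = p.
Proof. rewrite <- (PhiC hcm), (mulVr hG). apply (Phi1 hcm). Qed.
Lemma PhiK2 {H G : GOps} (hH : is_group H) (hG : is_group G) {t : H -> G} {Phi : G -> H -> H}
  (hcm : crossed_module t Phi) a p : Phi (ginv a) (Phi a p) = p.
Proof. rewrite <- (PhiC hcm), (mulVl hG). apply (Phi1 hcm). Qed.

Ltac gs hH hG hcm :=
  repeat progress (
    rewrite ?(mulA hH), ?(mulA hG), ?(mul1l hH), ?(mul1l hG), ?(mul1r hH), ?(mul1r hG),
      ?(mulVl hH), ?(mulVl hG), ?(mulVr hH), ?(mulVr hG), ?(mulKl hH), ?(mulKl hG),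
      ?(mulKr hH), ?(mulKr hG), ?(invM hH), ?(invM hG), ?(invK hH), ?(invK hG),
      ?(inv1 hH), ?(inv1 hG),
      ?(tM hcm), ?(PhiM hcm), ?(PhiC hcm), ?(Phi1 hcm), ?(Pf1 hcm), ?(Pf2 hcm),
      ?(t1 hH hG hcm), ?(tV hH hG hcm), ?(Phi_1 hH hG hcm), ?(PhiV hH hG hcm),
      ?(PhiK1 hH hG hcm), ?(PhiK2 hH hG hcm)).

Lemma pair_eq (A B : Type) (a a' : A) (b b' : B) : a = a' -> b = b' -> (a, b) = (a', b').
Proof. intros; subst; auto. Qed.

Lemma RB_one {G : GOps} (hG : is_group G) (B : G -> G) : rota_baxter B -> B gone = gone.
Proof.
  intro R. apply (idem1 hG). rewrite (R gone gone).
  rewrite (mul1l hG), (mul1r hG), (mulVr hG). auto.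
Qed.
Lemma RB_inv {G : GOps} (hG : is_group G) (B : G -> G) : rota_baxter B -> forall a,
  B (gmul (gmul (ginv (B a)) (ginv a)) (B a)) = ginv (B a).
Proof.
  intros R a. apply (inv_uniq hG). rewrite R.
  rewrite !(mulA hG), (mulKr hG), (mulKr hG), (mulVr hG). apply (RB_one hG _ R).
Qed.

Lemma graph_sub {G : GOps} (hG : is_group G) (B : G -> G) :
  rota_baxter B <-> is_subgroup (graph B).
Proof.
  split.
  - intro R. split; [|split].
    + unfold graph; simpl. symmetry; apply (RB_one hG _ R).
    + intros [a1 a2] [b1 b2]; unfold graph; simpl; intros -> ->. apply R.
    + intros [a1 a2]; unfold graph; simpl; intros ->. symmetry; apply (RB_inv hG _ R).
  - intros (_ & M & _) a b. exact (M (B a, a) (B b, b) eq_refl eq_refl).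
Qed.

Theorem theorem2p4 (H G : GOps) (hH : is_group H) (hG : is_group G)
    (t : H -> G) (Phi : G -> H -> H) (hcm : crossed_module t Phi)
    (B1 : H -> H) (B0 : G -> G) :
  rota_baxter_cm t Phi B1 B0 <->
  (is_subgroup (graph B1) /\ is_subgroup (graph B0) /\
   (forall p, graph B0 (tt t (B1 p, p))) /\
   (forall a p, graph B1 (Phi_tilde Phi (B0 a, a) (B1 p, p))) /\
   crossed_module_on (graph B1) (graph B0) (tt t) (Phi_tilde Phi)).
Proof.
  split.
  2:{ intros (S1 & S0 & T & P & _). split; [|split; [|split]].
      - apply (graph_sub hH); auto.
      - apply (graph_sub hG); auto.
      - intro p. apply (T p).
      - intros a p. apply (P a p). }
  intros (R1 & R0 & T & P).
  assert (S1 : is_subgroup (graph B1)) by (apply (graph_sub hH); auto).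
  assert (S0 : is_subgroup (graph B0)) by (apply (graph_sub hG); auto).
  assert (PG : forall a p, graph B0 a -> graph B1 p -> graph B1 (Phi_tilde Phi a p)).
  { intros [a1 a2] [p1 p2]; unfold graph; simpl; intros -> ->. apply (P a2 p2). }
  assert (PC : forall a b p, Phi_tilde Phi (gmul (g:=sdprod G) a b) p
                = Phi_tilde Phi a (Phi_tilde Phi b p)).
  { intros [a1 a2] [b1 b2] [p1 p2]. unfold Phi_tilde; simpl. apply pair_eq; gs hH hG hcm; reflexivity. }
  assert (P1 : forall p, Phi_tilde Phi (gone (g:=sdprod G)) p = p).
  { intros [p1 p2]. unfold Phi_tilde; simpl. apply pair_eq; gs hH hG hcm; reflexivity. }
  assert (VR : forall a : sdprod G, gmul a (ginv a) = gone).
  { intros [a1 a2]; simpl. apply pair_eq; gs hH hG hcm; reflexivity. }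
  assert (VL : forall a : sdprod G, gmul (ginv a) a = gone).
  { intros [a1 a2]; simpl. apply pair_eq; gs hH hG hcm; reflexivity. }
  split; [exact S1|split; [exact S0|split; [|split]]].
  - intro p. apply T.
  - intros a p. apply P.
  - split; [exact S1|split; [exact S0|split; [|split; [|split; [|split; [|split; [|split; [|split; [|split]]]]]]]]].
    + intros [p1 p2]; unfold graph, tt; simpl; intros ->. apply T.
    + intros [p1 p2] [q1 q2] _ _. unfold tt; simpl. apply pair_eq; gs hH hG hcm; reflexivity.
    + exact PG.
    + intros [a1 a2] [p1 p2] [q1 q2] _ _ _. unfold Phi_tilde; simpl. apply pair_eq; gs hH hG hcm; reflexivity.
    + intros a q Ha Hq. exists (Phi_tilde Phi (ginv a) q). split; [|split].
      * apply PG; auto. apply S0; auto.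
      * rewrite <- PC, VR. apply P1.
      * intros p' _ E. subst q. rewrite <- PC, VL. symmetry; apply P1.
    + intros p _. apply P1.
    + intros a b p _ _ _. apply PC.
    + intros [p1 p2] [q1 q2] _ _. unfold Phi_tilde, tt; simpl. apply pair_eq; gs hH hG hcm; reflexivity.
    + intros [a1 a2] [p1 p2] _ _. unfold Phi_tilde, tt; simpl. apply pair_eq; gs hH hG hcm; reflexivity.
Qed.
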